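(* Let $\mathbb{F}_d$ be a field with the discrete topology, let $G$ be an ample Hausdorff groupoid, and let $\sigma\colon G^{(2)} \to \mathbb{F}_d^\times$ be a continuous $2$-cocycle. Let $\Gamma$ be a discrete group with identity $e$, and let $c\colon G \to \Gamma$ be a continuous groupoid homomorphism such that the subgroupoid $G_e := c^{-1}(e)$ is effective. Let $Q$ be a $\Gamma$-graded ring and $\pi\colon A_{\mathbb{F}_d}(G,\sigma) \to Q$ a graded ring homomorphism. Then $\pi$ is injective if and only if $\pi(1_K) \neq 0$ for every nonempty compact open subset $K$ of $G^{(0)}$.
   Context: Groupoids are locally compact Hausdorff topological groupoids; $G$ is ample if it has a basis of compact open bisections; a groupoid $H$ is effective if the interior of $\{\gamma\in H : r(\gamma) = s(\gamma)\}$ equals $H^{(0)}$. A continuous $2$-cocycle is a continuous (locally constant) $\sigma\colon G^{(2)} \to \mathbb{F}_d^\times$ with $\sigma(\alpha,\beta)\sigma(\alpha\beta,\gamma) = \sigma(\alpha,\beta\gamma)\sigma(\beta,\gamma)$ and $\sigma(r(\gamma),\gamma)=1=\sigma(\gamma,s(\gamma))$. $A_{\mathbb{F}_d}(G,\sigma)$ is the algebra of locally constant compactly supported $f\colon G\to\mathbb{F}_d$ with multiplication $(fg)(\gamma) = \sum_{\alpha\beta=\gamma}\sigma(\alpha,\beta)f(\alpha)g(\beta)$. It is $\Gamma$-graded with homogeneous components $A_{\mathbb{F}_d}(G,\sigma)_\gamma = \{f : \{f\neq 0\}\subseteq c^{-1}(\gamma)\}$. A $\Gamma$-graded ring $Q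 = \bigoplus_{\gamma\in\Gamma} Q_\gamma$ has additive subgroups $Q_\gamma$ with $Q_\zeta Q_\eta \subseteq Q_{\zeta\eta}$; a graded homomorphism $\pi$ satisfies $\pi(A_{\mathbb{F}_d}(G,\sigma)_\gamma)\subseteq Q_\gamma$ for all $\gamma$. $1_K$ denotes the indicator function of $K$. *)

(* Defs.v *)
From HB Require Import structures.
From mathcomp Require Import all_boot all_order all_algebra.
From mathcomp Require Import boolp classical_sets functions cardinality fsbigop.
From mathcomp Require Import topology.
Set Implicit Arguments. Unset Strict Implicit. Unset Printing Implicit Defensive.
Import Order.TTheory GRing.Theory Num.Theory.
Local Open Scope classical_set_scope.
Local Open Scope ring_scope.

Definition is_group (T : Type) (mul : T -> T -> T) (e : T) (inv : T -> T) : Prop :=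
  [/\ forall a b c, mul a (mul b c) = mul (mul a b) c,
      forall a, mul e a = a /\ mul a e = a &
      forall a, mul (inv a) a = e /\ mul a (inv a) = e].

Definition is_rng (Q : zmodType) (mulQ : Q -> Q -> Q) : Prop :=
  [/\ forall a b c, mulQ a (mulQ b c) = mulQ (mulQ a b) c,
      forall a b c, mulQ a (b + c) = mulQ a b + mulQ a c &
      forall a b c, mulQ (a + b) c = mulQ a c + mulQ b c].

Definition is_graded_rng (Gam : Type) (gmul : Gam -> Gam -> Gam)
    (Q : zmodType) (mulQ : Q -> Q -> Q) (Qg : Gam -> set Q) : Prop :=
  [/\ is_rng mulQ,
      forall g, Qg g 0 /\ (forall x y, Qg g x -> Qg g y -> Qg g (x - y)),
      forall z h x y, Qg z x -> Qg h y -> Qg (gmul z h) (mulQ x y),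
      forall q : Q, exists n (d : 'I_n -> Gam) (x : 'I_n -> Q),
          (forall i, Qg (d i) (x i)) /\ q = \sum_(i < n) x i &
      (* the sum of the Q_g is direct *)
      forall n (d : 'I_n -> Gam) (x : 'I_n -> Q), injective d ->
          (forall i, Qg (d i) (x i)) -> \sum_(i < n) x i = 0 ->
          forall i, x i = 0].

(* A groupoid structure on the points of G: unit space G0, range r, source s,
   multiplication comp (meaningful on composable pairs s a = r b), inverse inv. *)
Definition composable (G : Type) (r s : G -> G) : set (G * G) :=
  [set p | s p.1 = r p.2].

Definition is_groupoid (G : Type) (G0 : set G) (r s : G -> G)
    (comp : G -> G -> G) (inv : G -> G) : Prop :=
  [/\ (forall x, G0 (r x) /\ G0 (s x)) /\
        (forall u, G0 u -> r u = u /\ s u = u),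
      forall a b, s a = r b -> r (comp a b) = r a /\ s (comp a b) = s b,
      forall a b c, s a = r b -> s b = r c ->
        comp a (comp b c) = comp (comp a b) c,
      forall x, comp (r x) x = x /\ comp x (s x) = x &
      forall x, [/\ r (inv x) = s x, s (inv x) = r x,
                  comp x (inv x) = r x & comp (inv x) x = s x]].

Definition is_topological_groupoid (G : topologicalType) (G0 : set G)
    (r s : G -> G) (comp : G -> G -> G) (inv : G -> G) : Prop :=
  [/\ is_groupoid G0 r s comp inv,
      {within composable r s, continuous (fun p : G * G => comp p.1 p.2)},
      continuous inv, continuous r & continuous s].

Definition locally_compact_space (G : topologicalType) : Prop :=
  forall x : G, exists K : set G, compact K /\ nbhs x K.

Definition open_bisection (G : topologicalType) (r s : G -> G) (B : set G) : Prop :=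
  [/\ open B, {in B &, injective r}, {in B &, injective s},
      forall V, open V -> V `<=` B -> open (r @` V) &
      forall V, open V -> V `<=` B -> open (s @` V)].

Definition ample (G : topologicalType) (r s : G -> G) : Prop :=
  forall (U : set G) (x : G), open U -> U x ->
    exists B, [/\ open_bisection r s B, compact B, B x & B `<=` U].

Definition rel_interior (G : topologicalType) (H A : set G) : set G :=
  [set x | H x /\ exists U : set G, [/\ open U, U x & U `&` H `<=` A]].

Definition effective (G : topologicalType) (G0 : set G) (r s : G -> G)
    (H : set G) : Prop :=
  rel_interior H (H `&` [set x | r x = s x]) = G0 `&` H.

(* continuous groupoid homomorphism into a discrete group *)
Definition cont_hom (G : topologicalType) (r s : G -> G) (comp : G -> G -> G)
    (Gam : Type) (gmul : Gam -> Gam -> Gam) (c : G -> Gam) : Prop :=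
  (forall a b, s a = r b -> c (comp a b) = gmul (c a) (c b)) /\
  (forall g : Gam, open (c @^-1` [set g])).

Definition cocycle (G : topologicalType) (r s : G -> G) (comp : G -> G -> G)
    (F : fieldType) (sigma : G -> G -> F) : Prop :=
  [/\ forall a b, s a = r b -> sigma a b != 0,
      forall a b c, s a = r b -> s b = r c ->
        sigma a b * sigma (comp a b) c = sigma a (comp b c) * sigma b c,
      forall x, sigma (r x) x = 1 /\ sigma x (s x) = 1 &
      (* continuity on G^(2) into the discrete space F *)
      forall p : G * G, composable r s p ->
        exists W : set (G * G), [/\ open W, W p &
          forall q, W q -> composable r s q -> sigma q.1 q.2 = sigma p.1 p.2]].

Definition supp (G : Type) (F : fieldType) (f : G -> F) : set G :=
  [set x | f x != 0].

Definition locally_constant (G : topologicalType) (F : Type) (f : G -> F) : Prop :=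
  forall x : G, exists U : set G, [/\ open U, U x & forall y, U y -> f y = f x].

Definition steinberg (G : topologicalType) (F : fieldType) : set (G -> F) :=
  [set f | locally_constant f /\ compact (closure (supp f))].

(* the twisted convolution product:
   (f g)(x) = sum_{a b = x} sigma(a, b) f(a) g(b)
            = sum_{a, r a = r x} sigma(a, a^-1 x) f(a) g(a^-1 x)  *)
Definition conv (G : topologicalType) (r : G -> G) (comp : G -> G -> G)
    (inv : G -> G) (F : fieldType) (sigma : G -> G -> F) (f g : G -> F) : G -> F :=
  fun x => \sum_(a \in [set a | r a = r x])
             sigma a (comp (inv a) x) * f a * g (comp (inv a) x).

Definition steinberg_hom (G : topologicalType) (F : fieldType) (Gam : Type)
    (c : G -> Gam) (gam : Gam) : set (G -> F) :=
  [set f | steinberg f /\ supp f `<=` c @^-1` [set gam]].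

Definition indic1 (G : Type) (F : fieldType) (K : set G) : G -> F :=
  fun x => (x \in K)%:R.

(* Main.v *)
Require Import Defs.
From HB Require Import structures.
From mathcomp Require Import all_boot all_order all_algebra.
From mathcomp Require Import boolp classical_sets functions cardinality fsbigop.
From mathcomp Require Import topology.
Import Order.TTheory GRing.Theory Num.Theory.
Local Open Scope classical_set_scope.
Local Open Scope ring_scope.

Module Helpers.
Set Implicit Arguments. Unset Strict Implicit. Unset Printing Implicit Defensive.


Section Gpd.
Context (G : Type) (G0 : set G) (r s : G -> G) (comp : G -> G -> G) (inv : G -> G).
Hypothesis HG : is_groupoid G0 r s comp inv.

Lemma gG0r x : G0 (r x). Proof. by case: HG => [[H _]] _ _ _ _; case: (H x). Qed.
Lemma gG0s x : G0 (s x). Proof. by case: HG => [[H _]] _ _ _ _; case: (H x). Qed.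
Lemma gunit_r u : G0 u -> r u = u. Proof. by case: HG => [[_ H]] _ _ _ _ /H []. Qed.
Lemma gunit_s u : G0 u -> s u = u. Proof. by case: HG => [[_ H]] _ _ _ _ /H []. Qed.
Lemma gr_comp a b : s a = r b -> r (comp a b) = r a.
Proof. by case: HG => _ H _ _ _ /H []. Qed.
Lemma gs_comp a b : s a = r b -> s (comp a b) = s b.
Proof. by case: HG => _ H _ _ _ /H []. Qed.
Lemma gassoc a b c : s a = r b -> s b = r c -> comp a (comp b c) = comp (comp a b) c.
Proof. by case: HG => _ _ H _ _; apply: H. Qed.
Lemma gcomp_r x : comp (r x) x = x. Proof. by case: HG => _ _ _ H _; case: (H x). Qed.
Lemma gcomp_s x : comp x (s x) = x. Proof. by case: HG => _ _ _ H _; case: (H x). Qed.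
Lemma gr_inv x : r (inv x) = s x. Proof. by case: HG => _ _ _ _ H; case: (H x). Qed.
Lemma gs_inv x : s (inv x) = r x. Proof. by case: HG => _ _ _ _ H; case: (H x). Qed.
Lemma gcomp_inv x : comp x (inv x) = r x. Proof. by case: HG => _ _ _ _ H; case: (H x). Qed.
Lemma ginv_comp x : comp (inv x) x = s x. Proof. by case: HG => _ _ _ _ H; case: (H x). Qed.

Lemma rr x : r (r x) = r x. Proof. exact/gunit_r/gG0r. Qed.
Lemma sr x : s (r x) = r x. Proof. exact/gunit_s/gG0r. Qed.

Lemma ginvK x : inv (inv x) = x.
Proof.
have e1 : inv (inv x) = comp (inv (inv x)) (comp (inv x) x).
  by rewrite ginv_comp -gr_inv -gs_inv gcomp_s.
rewrite e1 gassoc ?gs_inv ?gr_inv //.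
by rewrite ginv_comp gs_inv gcomp_r.
Qed.

Lemma gcancel a y : r a = r y -> comp a (comp (inv a) y) = y.
Proof.
move=> ay; rewrite gassoc ?gr_inv ?gs_inv //.
by rewrite gcomp_inv ay gcomp_r.
Qed.

Lemma ginv_unit u : G0 u -> inv u = u.
Proof.
move=> Hu; have := gcomp_r (inv u); rewrite gr_inv gunit_s // => E.
by rewrite -E gcomp_inv gunit_r.
Qed.

Lemma gr_invcomp a y : r a = r y -> r (comp (inv a) y) = s a.
Proof. by move=> ay; rewrite gr_comp ?gr_inv // gs_inv. Qed.
Lemma gs_invcomp a y : r a = r y -> s (comp (inv a) y) = s y.
Proof. by move=> ay; rewrite gs_comp // gs_inv. Qed.

Lemma gunit_eq a y : r a = r y -> G0 (comp (inv a) y) -> a = y.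
Proof.
move=> ay Hu; rewrite -(gcancel ay) -(gunit_r Hu) gr_invcomp //.
by rewrite gcomp_s.
Qed.

Lemma ginv_r a : comp (inv a) (r a) = inv a.
Proof. by rewrite -gs_inv gcomp_s. Qed.

Lemma G0_fix x : G0 x <-> r x = x.
Proof. by split => [/gunit_r//|<-]; apply: gG0r. Qed.

End Gpd.


Lemma open_nbhdP (T : topologicalType) (A : set T) :
  (forall x, A x -> exists B, [/\ open B, B x & B `<=` A]) -> open A.
Proof.
move=> H; rewrite openE => x Ax; have [B [oB Bx BA]] := H x Ax.
by rewrite /interior nbhsE; exists B.
Qed.

Lemma nbhs_openP (T : topologicalType) (x : T) (A : set T) :
  nbhs x A -> exists B, [/\ open B, B x & B `<=` A].
Proof. by rewrite nbhsE => -[B [oB Bx] BA]; exists B. Qed.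

Lemma open_nbhs' (T : topologicalType) (x : T) (A : set T) :
  open A -> A x -> nbhs x A.
Proof. by move=> oA Ax; apply: open_nbhs_nbhs. Qed.

Lemma separate (T : topologicalType) : hausdorff_space T ->
  forall x y : T, x <> y -> exists A B, [/\ open A, open B, A x, B y &
    forall z, A z -> B z -> False].
Proof.
move=> /[dup] HH; rewrite open_hausdorff => H x y /eqP /H [[A B]] /=.
rewrite !inE => -[Ax By] [oA oB AB]; exists A, B; split => // z Az Bz.
by have := congr1 (fun S => S z) AB => /= <-; split.
Qed.

Lemma open_preim (T U : topologicalType) (f : T -> U) (A : set U) :
  continuous f -> open A -> open (f @^-1` A).
Proof. by move=> cf; apply: open_comp => x _; apply: cf. Qed.

Lemma cover_cpt (T : topologicalType) (A : set T) (I : choiceType) (D : set I) (f : I -> set T) :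
  compact A -> (forall i, D i -> open (f i)) -> A `<=` cover D f -> finite_subset_cover D f A.
Proof.
case: (pselect (A !=set0)) => [[x Ax]|A0].
  pose Tp : ptopologicalType := HB.pack T (isPointed.Build T x).
  move=> cA; have : @compact Tp A by exact: cA.
  rewrite compact_cover; apply.
exists (fset_set set0); first by move=> y; rewrite in_fset_set // inE.
move=> y Ay; exfalso; apply: A0; by exists y.
Qed.

Section Topo.
Context (G : topologicalType) (G0 : set G) (r s : G -> G) (comp : G -> G -> G) (inv : G -> G).
Hypothesis HG : is_topological_groupoid G0 r s comp inv.
Hypothesis Hhaus : hausdorff_space G.
Hypothesis Hample : ample r s.

Let Hg : is_groupoid G0 r s comp inv. Proof. by case: HG. Qed.
Lemma cont_r : continuous r. Proof. by case: HG. Qed.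
Lemma cont_s : continuous s. Proof. by case: HG. Qed.
Lemma cont_inv : continuous inv. Proof. by case: HG. Qed.
Lemma cont_comp : {within composable r s, continuous (fun p : G * G => comp p.1 p.2)}.
Proof. by case: HG. Qed.

Lemma s_open V : open V -> open (s @` V).
Proof.
move=> oV; apply: open_nbhdP => _ [v Vv <-].
have [B [[oB _ _ _ sB] _ Bv BV]] := Hample oV Vv.
exists (s @` B); split; first exact: sB.
  by exists v.
by move=> _ [b Bb <-]; exists b => //; apply: BV.
Qed.

Lemma r_open V : open V -> open (r @` V).
Proof.
move=> oV; apply: open_nbhdP => _ [v Vv <-].
have [B [[oB _ _ rB _] _ Bv BV]] := Hample oV Vv.
exists (r @` B); split; first exact: rB.
  by exists v.
by move=> _ [b Bb <-]; exists b => //; apply: BV.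
Qed.

Lemma open_G0 : open G0.
Proof.
apply: open_nbhdP => u Gu; exists (r @` setT); split.
- exact/r_open/openT.
- by exists u => //; rewrite (gunit_r Hg).
- by move=> _ [x _ <-]; apply: (gG0r Hg).
Qed.

Lemma closed_G0 : closed G0.
Proof.
rewrite -openC; apply: open_nbhdP => x nG0x.
have rx : r x <> x by move=> e; apply: nG0x; rewrite -e; apply: (gG0r Hg).
have [A [B [oA oB Arx Bx AB]]] := separate Hhaus rx.
exists (r @^-1` A `&` B); split.
- by apply: openI => //; apply: open_preim => //; apply: cont_r.
- by [].
- by move=> y [Ary By] /(gunit_r Hg) e; apply: (AB y) => //; rewrite -e.
Qed.

Lemma closed_composable : closed (composable r s).
Proof.
rewrite -openC; apply: open_nbhdP => p np.
have [A [B [oA oB Ax By AB]]] := separate Hhaus np.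
exists ((s @^-1` A) `*` (r @^-1` B)); split.
- rewrite openE => q [Aq Bq]; rewrite /interior /=.
  exists (s @^-1` A, r @^-1` B) => //; split => /=.
  + by apply: open_nbhs'; [apply: open_preim => //; apply: cont_s|].
  + by apply: open_nbhs'; [apply: open_preim => //; apply: cont_r|].
- by [].
- by move=> q [Aq Bq] e; apply: (AB (s q.1)) => //; rewrite /composable /= in e; rewrite e.
Qed.

End Topo.

Section Fib.
Context (G : topologicalType) (r s : G -> G) (comp : G -> G -> G).
Context (Gam : Type) (gmul : Gam -> Gam -> Gam) (c : G -> Gam).
Hypothesis Hc : cont_hom r s comp gmul c.

Lemma open_fib g : open (c @^-1` [set g]). Proof. by case: Hc. Qed.
Lemma closed_fib g : closed (c @^-1` [set g]).
Proof.
rewrite -openC; apply: open_nbhdP => x nx; exists (c @^-1` [set c x]); split => //.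
- exact: open_fib.
- by move=> y /= ->.
Qed.
End Fib.


Section Stein.
Context (G : topologicalType) (F : fieldType).

Lemma indic_in (K : set G) x : K x -> indic1 F K x = 1.
Proof. by move=> Kx; rewrite /indic1 mem_set. Qed.
Lemma indic_out (K : set G) x : ~ K x -> indic1 F K x = 0.
Proof. by move=> Kx; rewrite /indic1 memNset. Qed.

Lemma lc_const (a : F) : locally_constant (fun _ : G => a).
Proof. by move=> x; exists setT; split => //; apply: openT. Qed.

Lemma lc_op2 (op : F -> F -> F) (f g : G -> F) :
  locally_constant f -> locally_constant g -> locally_constant (fun x => op (f x) (g x)).
Proof.
move=> lf lg x; have [U [oU Ux fU]] := lf x; have [V [oV Vx gV]] := lg x.
exists (U `&` V); split => //; first exact: openI.
by move=> y [Uy Vy]; rewrite fU ?gV.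
Qed.

Lemma lc_comp (phi : G -> G) (f : G -> F) :
  continuous phi -> locally_constant f -> locally_constant (fun x => f (phi x)).
Proof.
move=> cp lf x; have [U [oU Ux fU]] := lf (phi x).
exists (phi @^-1` U); split => //; first exact: open_preim.
by move=> y Uy; rewrite fU.
Qed.

Lemma lc_indic (K : set G) : open K -> closed K -> locally_constant (indic1 F K).
Proof.
move=> oK cK x; have [Kx|nKx] := pselect (K x).
  by exists K; split => // y Ky; rewrite !indic_in.
exists (~` K); split => //; first by rewrite openC.
by move=> y Ky; rewrite !indic_out.
Qed.

Lemma steinberg_sub (f g : G -> F) :
  locally_constant g -> supp g `<=` supp f -> steinberg f -> steinberg g.
Proof.
move=> lg sgf [_ cf]; split => //; apply: (subclosed_compact _ cf).
  exact: closed_closure.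
exact: closureS.
Qed.

Lemma steinberg_cpt (g : G -> F) (K : set G) : hausdorff_space G ->
  locally_constant g -> supp g `<=` K -> compact K -> steinberg g.
Proof.
move=> hG lg sgK cK; split => //; apply: (subclosed_compact _ cK).
  exact: closed_closure.
by rewrite [X in _ `<=` X](closure_id _).1; [apply: closureS| apply: compact_closed].
Qed.

Lemma steinberg_indic (K : set G) : hausdorff_space G ->
  open K -> compact K -> steinberg (indic1 F K).
Proof.
move=> hG oK cK; apply: (steinberg_cpt (K := K)) => //.
  by apply: lc_indic => //; apply: compact_closed.
move=> x; rewrite /supp /= => nz; apply: contrapT => nK; move: nz.
by rewrite indic_out // eqxx.
Qed.

Lemma steinberg_scal_indic (K : set G) (mu : F) : hausdorff_space G ->
  open K -> compact K -> steinberg (fun x => mu * indic1 F K x).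
Proof.
move=> hG oK cK; apply: (steinberg_cpt (K := K)) => //.
  by apply: lc_op2; [apply: lc_const|apply: lc_indic => //; apply: compact_closed].
move=> x; rewrite /supp /= => nz; apply: contrapT => nK; move: nz.
by rewrite indic_out // mulr0 eqxx.
Qed.

Lemma steinberg0 : steinberg (fun _ : G => 0 : F).
Proof.
split; first exact: lc_const.
have -> : supp (fun _ : G => 0 : F) = set0 by apply/seteqP; split => x //=; rewrite /supp /= eqxx.
by rewrite closure0; apply: compact0.
Qed.

End Stein.

Lemma fsum_one (I : choiceType) (R : zmodType) (P : set I) (f : I -> R) (a0 : I) :
  P a0 -> (forall a, P a -> a <> a0 -> f a = 0) ->
  \sum_(a \in P) f a = f a0.
Proof.
move=> Pa0 H; rewrite -(fsbig_widen [set a0]) ?fsbig_set1 //.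
  by move=> a ->.
by move=> a [Pa /= na]; apply: H.
Qed.


Section Conv.
Context (G : topologicalType) (G0 : set G) (r s : G -> G) (comp : G -> G -> G) (inv : G -> G).
Hypothesis HG : is_groupoid G0 r s comp inv.
Context (F : fieldType) (sigma : G -> G -> F).
Hypothesis Hsigma : cocycle r s comp sigma.

Lemma sig_s x : sigma x (s x) = 1. Proof. by case: Hsigma => _ _ H _; case: (H x). Qed.
Lemma sig_r x : sigma (r x) x = 1. Proof. by case: Hsigma => _ _ H _; case: (H x). Qed.
Lemma sig_nz a b : s a = r b -> sigma a b != 0. Proof. by case: Hsigma => H _ _ _; apply: H. Qed.

Lemma conv_one (f g : G -> F) y a0 : r a0 = r y ->
  (forall a, r a = r y -> a <> a0 ->
     sigma a (comp (inv a) y) * f a * g (comp (inv a) y) = 0) ->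
  conv r comp inv sigma f g y = sigma a0 (comp (inv a0) y) * f a0 * g (comp (inv a0) y).
Proof. by move=> a0y H; rewrite /conv; apply: fsum_one. Qed.

Lemma conv_none (f g : G -> F) y :
  (forall a, r a = r y -> sigma a (comp (inv a) y) * f a * g (comp (inv a) y) = 0) ->
  conv r comp inv sigma f g y = 0.
Proof. by move=> H; rewrite /conv; apply: fsbig1. Qed.

Lemma conv_indicR (K : set G) (mu : F) (f : G -> F) y : K `<=` G0 ->
  conv r comp inv sigma f (fun z => mu * indic1 F K z) y = f y * (mu * indic1 F K (s y)).
Proof.
move=> KG0; rewrite (@conv_one _ _ y y) //.
  by rewrite (ginv_comp HG) sig_s mul1r.
move=> a ay nay; have [Kz|nKz] := pselect (K (comp (inv a) y)).
  by exfalso; apply: nay; apply: (gunit_eq HG ay); apply: KG0.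
by rewrite indic_out // !mulr0.
Qed.

End Conv.


Section Main.
Context  (F : fieldType)
  (G : topologicalType) (G0 : set G) (r s : G -> G)
  (comp : G -> G -> G) (inv : G -> G)
  (HG : is_topological_groupoid G0 r s comp inv)
  (Hhaus : hausdorff_space G) (Hlc : locally_compact_space G)
  (Hample : ample r s)
  (sigma : G -> G -> F) (Hsigma : cocycle r s comp sigma)
  (Gam : Type) (gmul : Gam -> Gam -> Gam) (e : Gam) (ginv : Gam -> Gam)
  (HGam : is_group gmul e ginv)
  (c : G -> Gam) (Hc : cont_hom r s comp gmul c)
  (Heff : effective G0 r s (c @^-1` [set e]))
  (Q : zmodType) (mulQ : Q -> Q -> Q) (Qg : Gam -> set Q)
  (HQ : is_graded_rng gmul mulQ Qg)
  (pi : (G -> F) -> Q)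
  (pi_add : forall f g, steinberg f -> steinberg g ->
     pi (fun x => f x + g x) = pi f + pi g)
  (pi_mul : forall f g, steinberg f -> steinberg g ->
     pi (conv r comp inv sigma f g) = mulQ (pi f) (pi g))
  (pi_graded : forall (gam : Gam) (f : G -> F),
     steinberg_hom c gam f -> Qg gam (pi f)).

Let Hg : is_groupoid G0 r s comp inv. Proof. by case: HG. Qed.

Lemma pi0 : pi (fun _ => 0) = 0.
Proof.
have := pi_add (steinberg0 G F) (steinberg0 G F).
have -> : (fun _ : G => (0 : F) + 0) = (fun _ => 0) by apply: funext => x; rewrite addr0.
by move=> E; apply/esym; apply: (addrI (pi (fun _ => 0))); rewrite addr0 -E.
Qed.

Lemma mulQr0 a : mulQ a 0 = 0.
Proof.
case: HQ => [[_ H _]] _ _ _ _; have := H a 0 0; rewrite addr0.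
by move=> E; apply/esym; apply: (addrI (mulQ a 0)); rewrite addr0 -E.
Qed.

Lemma mulQ0r a : mulQ 0 a = 0.
Proof.
case: HQ => [[_ _ H]] _ _ _ _; have := H 0 0 a; rewrite addr0.
by move=> E; apply/esym; apply: (addrI (mulQ 0 a)); rewrite addr0 -E.
Qed.

Lemma steinberg_add (f g : G -> F) : steinberg f -> steinberg g ->
  steinberg (fun x => f x + g x).
Proof.
move=> [lf cf] [lg cg].
apply: (steinberg_cpt (K := closure (supp f) `|` closure (supp g))) => //.
- exact: lc_op2.
- move=> x; rewrite /supp /= => nz; apply: contrapT => /not_orP [nf ng].
  move: nz; have -> : f x = 0.
    by apply: contrapT => /eqP nf'; apply: nf; apply: subset_closure.
  have -> : g x = 0.
    by apply: contrapT => /eqP ng'; apply: ng; apply: subset_closure.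
  by rewrite addr0 eqxx.
- exact: compactU.
Qed.

Lemma steinberg_sum n (hs : 'I_n -> G -> F) : (forall i, steinberg (hs i)) ->
  steinberg (fun y => \sum_(i < n) hs i y).
Proof.
elim: n hs => [|n IH] hs H.
  have -> : (fun y => \sum_(i < 0) hs i y) = (fun _ => 0).
    by apply: funext => y; rewrite big_ord0.
  exact: steinberg0.
have -> : (fun y => \sum_(i < n.+1) hs i y) =
   (fun y => (\sum_(i < n) hs (widen_ord (leqnSn n) i) y) + hs ord_max y).
  by apply: funext => y; rewrite big_ord_recr.
by apply: steinberg_add => //; apply: (IH (fun i => hs (widen_ord (leqnSn n) i))).
Qed.

Lemma pi_sum n (hs : 'I_n -> G -> F) : (forall i, steinberg (hs i)) ->
  pi (fun y => \sum_(i < n) hs i y) = \sum_(i < n) pi (hs i).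
Proof.
elim: n hs => [|n IH] hs H.
  have -> : (fun y => \sum_(i < 0) hs i y) = (fun _ => 0).
    by apply: funext => y; rewrite big_ord0.
  by rewrite pi0 big_ord0.
have -> : (fun y => \sum_(i < n.+1) hs i y) =
   (fun y => (\sum_(i < n) hs (widen_ord (leqnSn n) i) y) + hs ord_max y).
  by apply: funext => y; rewrite big_ord_recr.
rewrite pi_add //; last by apply: steinberg_sum.
by rewrite (IH (fun i => hs (widen_ord (leqnSn n) i))) // big_ord_recr.
Qed.

Lemma homog (h0 : G -> F) : steinberg h0 -> pi h0 = 0 -> forall x0, h0 x0 != 0 ->
  exists h, [/\ steinberg h, pi h = 0, supp h `<=` c @^-1` [set c x0] & h x0 != 0].
Proof.
move=> Sh0 pih0 x0 hx0.
have cS : compact (closure (supp h0)) := Sh0.2.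
set S := closure (supp h0) in cS.
have [y _|y Sy|D' _ SD'] := cover_cpt (D := S) (f := fun y => c @^-1` [set c y]) cS.
- exact: (open_fib Hc).
- by exists y.
pose T : eqType := HB.pack Gam (gen_eqMixin Gam).
pose ds : seq T := undup [seq (c y : T) | y <- finmap.enum_fset D'].
pose n := size ds.
pose d : 'I_n -> Gam := fun i => nth e ds i.
have dinj : injective d.
  move=> i j dij; apply: val_inj => /=; apply/eqP.
  by rewrite -(@nth_uniq T e _ _ _ (ltn_ord i) (ltn_ord j) (undup_uniq _)); apply/eqP.
have inds y : S y -> (c y : T) \in ds.
  move=> /SD' [y' /= y'D' /= ->]; rewrite /ds (@mem_undup T); apply: (map_f (fun y => (c y : T))); exact: y'D'.
pose hs i y := h0 y * indic1 F (c @^-1` [set d i]) y.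
have hsS i : steinberg (hs i).
  apply: (steinberg_sub _ _ Sh0).
    by apply: lc_op2; [exact: Sh0.1|apply: lc_indic; [apply: (open_fib Hc)|apply: (closed_fib Hc)]].
  by move=> y; rewrite /supp /hs /=; apply: contra_neq => ->; rewrite mul0r.
have hsupp i : supp (hs i) `<=` c @^-1` [set d i].
  move=> y; rewrite /supp /hs /= => nz; apply: contrapT => nc; move: nz.
  by rewrite indic_out // mulr0 eqxx.
have hsum : (fun y => \sum_(i < n) hs i y) = h0.
  apply: funext => y; have [/eqP h0y|h0y] := boolP (h0 y == 0).
    by rewrite h0y big1 // => i _; rewrite /hs h0y mul0r.
  have Sy : S y by apply: subset_closure.
  have iy : (index (c y : T) ds < n)%N by rewrite index_mem; apply: inds.
  rewrite (bigD1 (Ordinal iy)) //= big1 ?addr0.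
    by rewrite /hs indic_in ?mulr1 //= /d (@nth_index T) //; apply: inds.
  move=> j nj; rewrite /hs indic_out ?mulr0 // => /= cyj.
  by move/eqP: nj; apply; apply: dinj; rewrite -cyj /d /= (@nth_index T) //; apply: inds.
have := pi_sum hsS; rewrite hsum pih0 => /esym sum0.
have Hdir := HQ; case: Hdir => _ _ _ _ Hdir.
have x_0 := Hdir n d (fun i => pi (hs i)) dinj
   (fun i => pi_graded (conj (hsS i) (hsupp i))) sum0.
have ix : (index (c x0 : T) ds < n)%N by rewrite index_mem; apply/inds/subset_closure.
have dix : d (Ordinal ix) = c x0 by rewrite /d /= (@nth_index T) //; apply/inds/subset_closure.
exists (hs (Ordinal ix)); split => //.
- by move=> y /hsupp; rewrite /= dix.
- by rewrite /hs indic_in ?mulr1 //= dix.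
Qed.


Lemma c_unit u : G0 u -> c u = e.
Proof.
move=> Gu; case: HGam => _ Hid Hinv; case: Hc => Hm _.
have E : c u = gmul (c u) (c u).
  rewrite -Hm ?(gunit_s Hg Gu) ?(gunit_r Hg Gu) //.
  by rewrite -{1 2}(gunit_r Hg Gu) (gcomp_r Hg) (gunit_r Hg Gu).
have := (Hinv (c u)).1; rewrite {2}E; case: HGam => Ha _ _; rewrite Ha (Hinv (c u)).1.
by move=> <-; rewrite (Hid (c u)).1.
Qed.

Lemma step (O W : set G) : open O -> open W -> W !=set0 ->
  O `<=` c @^-1` [set e] -> (forall z, O z -> ~ G0 z) -> {in O &, injective s} ->
  exists W', [/\ open W', W' !=set0, W' `<=` W &
    forall z, O z -> W' (r z) -> W' (s z) -> False].
Proof.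
move=> oO oW W0 Oe OG0 sinj.
case: (pselect (exists z, [/\ O z, W (s z) & r z <> s z])).
  move=> [z [Oz Wsz rzsz]].
  have [A [B' [oA oB' Asz Brz AB]]] := separate Hhaus (nesym rzsz).
  exists (s @` (O `&` s @^-1` (W `&` A) `&` r @^-1` B')); split.
  - apply: (s_open Hample); apply: openI; first apply: openI => //.
      by apply: open_preim; [apply: (cont_s HG)|apply: openI].
    by apply: open_preim; [apply: (cont_r HG)|].
  - by exists (s z); exists z.
  - by move=> _ [z' [[_ [Wz' _]] _] <-].
  - move=> z1 Oz1 [z3 [[Oz3 [Wz3 Az3]] _] e3] [z2 [[Oz2 _] Bz2] e2].
    have z21 : z2 = z1 by apply: sinj; rewrite ?inE.
    by apply: (AB (r z1)); [rewrite -e3|rewrite -z21].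
move=> nex; exists W; split => // z Oz Wr Ws.
have rs : r z = s z by apply: contrapT => nrs; apply: nex; exists z.
have : rel_interior (c @^-1` [set e]) (c @^-1` [set e] `&` [set x | r x = s x]) z.
  split; first exact: Oe.
  exists (O `&` s @^-1` W); split => //.
    by apply: openI => //; apply: open_preim => //; apply: (cont_s HG).
  move=> z' [[Oz' Wz'] ez']; split => //=.
  by apply: contrapT => nrs; apply: nex; exists z'.
by rewrite Heff => -[/OG0].
Qed.

Definition goodO (O : set G) := open O /\ (O `<=` G0 \/
  [/\ O `<=` c @^-1` [set e], (forall z, O z -> ~ G0 z) & {in O &, injective s}]).

Lemma iter (O : G -> set G) (Ys : seq G) (W : set G) : open W -> W !=set0 ->
  (forall y, y \in Ys -> goodO (O y)) ->
  exists W', [/\ open W', W' !=set0, W' `<=` W &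
    forall y, y \in Ys -> forall z, O y z -> ~ G0 z -> W' (r z) -> W' (s z) -> False].
Proof.
elim: Ys W => [|y Ys IH] W oW W0 Hgood.
  by exists W; split.
have Hg' : forall y', y' \in Ys -> goodO (O y').
  by move=> y' yY; apply: Hgood; rewrite inE yY orbT.
have [W1 [oW1 W10 W1W H1]] := IH W oW W0 Hg'.
have [oO [OG0|[Oe OG0 sinj]]] := Hgood y (mem_head _ _).
  exists W1; split => // y' /[1!inE] /orP [/eqP ->|y'Y]; last exact: H1.
  by move=> z /OG0.
have [W2 [oW2 W20 W2W1 H2]] := step oO oW1 W10 Oe OG0 sinj.
exists W2; split => //; first by move=> x /W2W1 /W1W.
move=> y' /[1!inE] /orP [/eqP ->|y'Y] z Oz nG Wr Ws; first exact: (H2 z).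
by apply: (H1 y' y'Y z Oz nG); apply: W2W1.
Qed.


Lemma closed_preim (f : G -> G) (A : set G) : continuous f -> closed A -> closed (f @^-1` A).
Proof. by move=> cf cA; rewrite -openC preimage_setC; apply: open_preim => //; rewrite openC. Qed.

Lemma kill (h : G -> F) x0 : steinberg h -> pi h = 0 ->
  supp h `<=` c @^-1` [set c x0] -> h x0 != 0 ->
  exists K, [/\ K `<=` G0, K !=set0, compact K, open K & pi (indic1 F K) = 0].
Proof.
move=> Sh pih hsupp hx0.
have [Uh [oUh Uhx0 hUh]] := Sh.1 x0.
have cp : composable r s (inv x0, x0) by rewrite /composable /= (gs_inv Hg).
have [Wc [oWc Wcp Wcq]] : exists W, [/\ open W, W (inv x0, x0) &
    forall q, W q -> composable r s q -> sigma q.1 q.2 = sigma (inv x0) x0].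
  by case: Hsigma => _ _ _ /(_ _ cp).
have [[P1 P2] [/= nP1 nP2] P12] : nbhs (inv x0, x0) Wc := open_nbhs' oWc Wcp.
have [A1 [oA1 A1x A1P]] := nbhs_openP nP1.
have [A2 [oA2 A2x A2P]] := nbhs_openP nP2.
pose U := c @^-1` [set c (inv x0)] `&` inv @^-1` (Uh `&` A2) `&` A1.
have oU : open U.
  apply: openI => //; apply: openI; first exact: (open_fib Hc).
  by apply: open_preim; [apply: (cont_inv HG)|apply: openI].
have Ux : U (inv x0) by split => //; split => //=; rewrite (ginvK Hg).
have [B [[oB rinjB sinjB rB sB] cB Bx BU]] := Hample oU Ux.
have Bc a : B a -> c a = c (inv x0) by move=> /BU [[]].
have Bh a : B a -> h (inv a) = h x0 by move=> /BU [[_ [/hUh]]].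
have Bsig a : B a -> sigma a (inv a) = sigma (inv x0) x0.
  move=> /BU [[_ [_ A2a]] A1a]; apply: (Wcq (a, inv a)).
    by apply: P12; split; [apply: A1P|apply: A2P].
  by rewrite /composable /= (gr_inv Hg).
have cS : compact (closure (supp h)) := Sh.2.
set S := closure (supp h) in cS.
pose Cs := (fun p : G * G => comp p.1 p.2) @` ((B `*` S) `&` composable r s).
have cCs : compact Cs.
  apply: continuous_compact.
    by apply: (continuous_subspaceW _ (cont_comp HG)) => p [].
  by apply: compact_closedI; [exact: compact_setX|exact: (closed_composable HG Hhaus)].
pose Ce := Cs `&` c @^-1` [set e].
have cCe : compact Ce by apply: compact_closedI => //; apply: (closed_fib Hc).
have [O HO] : {O : G -> set G & forall y, goodO (O y) /\ (Ce y -> O y y)}.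
  apply: (@choice G (set G) (fun y O => goodO O /\ (Ce y -> O y))) => y.
  case: (pselect (G0 y \/ c y <> e)) => [H|H].
    exists G0; split; first by split; [exact: (open_G0 HG Hample)|left].
    by move=> [_ /= cye]; case: H.
  have nG : ~ G0 y by move=> ?; apply: H; left.
  have ce : c y = e by apply: contrapT => ?; apply: H; right.
  have oV : open (~` G0 `&` c @^-1` [set e]).
    by apply: openI; [rewrite openC; exact: (closed_G0 HG Hhaus)|exact: (open_fib Hc)].
  have [By [[oBy _ sinjy _ _] _ Byy ByV]] := Hample oV (conj nG ce).
  exists By; split => //; split => //; right; split.
  - by move=> z /ByV [].
  - by move=> z /ByV [].
  - exact: sinjy.
have [D' _ CeD'] := cover_cpt (D := Ce) (f := O) cCe (fun y _ => (HO y).1.1)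
   (fun y Cey => ex_intro2 _ _ y Cey ((HO y).2 Cey)).
have oW0 : open (r @` B) by apply: rB.
have W00 : (r @` B) !=set0 by exists (r (inv x0)), (inv x0).
have [W [oW [w Ww] WB HW]] := iter (Ys := finmap.enum_fset D') oW0 W00 (fun y _ => (HO y).1).
have [K [[oK _ _ _ _] cK Kw KW]] := Hample oW Ww.
have KG0 : K `<=` G0 by move=> x /KW /WB [b _ <-]; apply: (gG0r Hg).
exists K; split => //; first by exists w.
have clK : closed K by apply: compact_closed.
pose BK := B `&` r @^-1` K.
have oBK : open BK by apply: openI => //; apply: open_preim => //; apply: (cont_r HG).
have cBK : compact BK by apply: compact_closedI => //; apply: closed_preim => //; apply: (cont_r HG).
pose f1 := indic1 F BK.
have Sf1 : steinberg f1 by apply: steinberg_indic.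
pose g1 := fun z => 1 * indic1 F K z.
have Sg1 : steinberg g1 by apply: steinberg_scal_indic.
pose f2 := conv r comp inv sigma h g1.
have f2E : f2 = fun y => h y * (1 * indic1 F K (s y)).
  by apply: funext => y; rewrite /f2 /g1 (conv_indicR Hg).
have Sf2 : steinberg f2.
  rewrite f2E; apply: (steinberg_sub _ _ Sh).
    apply: lc_op2; first exact: Sh.1.
    apply: lc_op2; first exact: lc_const.
    by apply: lc_comp; [exact: (cont_s HG)|exact: lc_indic].
  by move=> y; rewrite /supp /=; apply: contra_neq => ->; rewrite mul0r.
have pif2 : pi f2 = 0 by rewrite /f2 pi_mul // pih mulQ0r.
pose lam := sigma (inv x0) x0 * h x0.
have lam0 : lam != 0 by rewrite mulf_neq0 // (sig_nz Hsigma) // (gs_inv Hg).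
have FE : conv r comp inv sigma f1 f2 = fun y => lam * indic1 F K y.
  apply: funext => y.
  case: (pselect (exists a, [/\ B a, K (r a) & r a = r y])).
    case=> a [Ba Ka ay]; rewrite (conv_one (a0 := a)) //; last first.
      move=> a' a'y na'; have [[Ba' Ka']|nBK] := pselect (BK a').
        by exfalso; apply: na'; apply: rinjB; rewrite ?inE // a'y.
      by rewrite /f1 indic_out // mulr0 mul0r.
    rewrite /f1 indic_in // f2E /= (gs_invcomp Hg ay).
    case: (pselect (G0 y)) => [Gy|nGy].
      have ry : r y = y by apply: (gunit_r Hg).
      have Ky : K y by rewrite -ry -ay.
      have -> : comp (inv a) y = inv a by rewrite -ry -ay (ginv_r Hg).
      rewrite (Bsig a Ba) (Bh a Ba) (gunit_s Hg Gy) !indic_in //.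
      by rewrite !mulr1.
    rewrite [indic1 F K y]indic_out; last by move/KG0.
    have [Ksy|nKsy] := pselect (K (s y)); last by rewrite indic_out // !mulr0.
    have [hz|hz] := eqVneq (h (comp (inv a) y)) 0; first by rewrite hz !mul0r !mulr0.
    exfalso.
    have Cey : Ce y.
      split.
        exists (a, comp (inv a) y); last exact: (gcancel Hg ay).
        split; first split => //=; first by apply: subset_closure.
        by rewrite /composable /= (gr_invcomp Hg ay).
      rewrite /= -(gcancel Hg ay); case: Hc => Hm _.
      rewrite Hm; last by rewrite (gr_invcomp Hg ay).
      rewrite (Bc a Ba) (hsupp _ hz) -Hm; last by rewrite (gs_inv Hg).
      by rewrite (ginv_comp Hg) c_unit //; apply: (gG0s Hg).
    have [y' y'D Oy'y] := CeD' y Cey.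
    apply: (HW y' y'D y Oy'y nGy); apply: KW => //; by rewrite -ay.
  move=> nex; rewrite conv_none; last first.
    move=> a ay; rewrite /f1 indic_out ?mulr0 ?mul0r // => -[Ba Ka].
    by apply: nex; exists a.
  rewrite indic_out ?mulr0 // => Ky; have /WB [b Bb rby] := KW _ Ky.
  have ry : r y = y by apply: (gunit_r Hg); apply: KG0.
  by apply: nex; exists b; split => //; rewrite rby // ry.
have pilam : pi (fun y => lam * indic1 F K y) = 0 by rewrite -FE pi_mul // pif2 mulQr0.
have Sl : steinberg (fun y => lam * indic1 F K y) by apply: steinberg_scal_indic.
have Sli : steinberg (fun y => lam^-1 * indic1 F K y) by apply: steinberg_scal_indic.
have IE : indic1 F K = conv r comp inv sigma (fun y => lam^-1 * indic1 F K y)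
    (fun y => lam * indic1 F K y).
  apply: funext => y; rewrite (conv_indicR Hg) //.
  have [Ky|nKy] := pselect (K y); last by rewrite [indic1 F K y]indic_out // mulr0 mul0r.
  rewrite (gunit_s Hg (KG0 _ Ky)) !indic_in // !mulr1 mulVf //.
by rewrite IE pi_mul // pilam mulQr0.
Qed.


Lemma main_iff :
  (forall f g, steinberg f -> steinberg g -> pi f = pi g -> f = g) <->
  (forall K : set G, K `<=` G0 -> K !=set0 -> compact K ->
     (exists U : set G, open U /\ K = U `&` G0) ->
     pi (indic1 F K) != 0).
Proof.
split.
  move=> inj K KG0 [k Kk] cK [U [oU KU]]; apply/eqP => pK0.
  have oK : open K by rewrite KU; apply: openI => //; apply: (open_G0 HG Hample).
  have SK : steinberg (indic1 F K) by apply: steinberg_indic.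
  have := inj _ _ SK (steinberg0 G F); rewrite pK0 pi0 => /(_ erefl).
  by move/(congr1 (fun f => f k)); rewrite /= indic_in // => /eqP; rewrite oner_eq0.
move=> H f g Sf Sg pfg; apply: contrapT => nfg.
have [x0 fgx0] : exists x0, f x0 <> g x0.
  by apply: contrapT => nex; apply: nfg; apply: funext => x; apply: contrapT => nx; apply: nex; exists x.
pose h0 := fun x => f x + - g x.
have Sng : steinberg (fun x => - g x).
  apply: (steinberg_sub _ _ Sg); first by move=> x; have [U [oU Ux gU]] := Sg.1 x; exists U; split => // y Uy; rewrite gU.
  by move=> x; rewrite /supp /= oppr_eq0.
have Sh0 : steinberg h0 by apply: steinberg_add.
have pih0 : pi h0 = 0.
  have := pi_add Sh0 Sg.
  have -> : (fun x => h0 x + g x) = f by apply: funext => x; rewrite /h0 subrK.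
  by rewrite pfg => E; apply: (addIr (pi g)); rewrite add0r -E.
have hx0 : h0 x0 != 0 by rewrite /h0 subr_eq0; apply/eqP.
have [h [Sh pih hsupp hx]] := homog Sh0 pih0 hx0.
have [K [KG0 K0 cK oK pK]] := kill Sh pih hsupp hx.
have : pi (indic1 F K) != 0.
  apply: H => //; exists K; split => //.
  by apply/seteqP; split => x; [move=> Kx; split => //; apply: KG0|case].
by rewrite pK eqxx.
Qed.

End Main.

End Helpers.

Theorem theorem7p2
  (F : fieldType)
  (G : topologicalType) (G0 : set G) (r s : G -> G)
  (comp : G -> G -> G) (inv : G -> G)
  (HG : is_topological_groupoid G0 r s comp inv)
  (Hhaus : hausdorff_space G) (Hlc : locally_compact_space G)
  (Hample : ample r s)
  (sigma : G -> G -> F) (Hsigma : cocycle r s comp sigma)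
  (Gam : Type) (gmul : Gam -> Gam -> Gam) (e : Gam) (ginv : Gam -> Gam)
  (HGam : is_group gmul e ginv)
  (c : G -> Gam) (Hc : cont_hom r s comp gmul c)
  (Heff : effective G0 r s (c @^-1` [set e]))
  (Q : zmodType) (mulQ : Q -> Q -> Q) (Qg : Gam -> set Q)
  (HQ : is_graded_rng gmul mulQ Qg)
  (pi : (G -> F) -> Q)
  (pi_add : forall f g, steinberg f -> steinberg g ->
     pi (fun x => f x + g x) = pi f + pi g)
  (pi_mul : forall f g, steinberg f -> steinberg g ->
     pi (conv r comp inv sigma f g) = mulQ (pi f) (pi g))
  (pi_graded : forall (gam : Gam) (f : G -> F),
     steinberg_hom c gam f -> Qg gam (pi f)) :
  (forall f g, steinberg f -> steinberg g -> pi f = pi g -> f = g) <->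
  (forall K : set G, K `<=` G0 -> K !=set0 -> compact K ->
     (exists U : set G, open U /\ K = U `&` G0) ->
     pi (indic1 F K) != 0).
Proof.
exact: (Helpers.main_iff HG Hhaus Hample Hsigma HGam Hc Heff HQ pi_add pi_mul pi_graded).
Qed.
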